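(* The optimal objective value of the multi-commodity NPP equals the optimal objective value of the conjugate bilevel formulation $\max_{w,t}\{w^\top t : w\in\mathbb{R}^{\mathcal{A}_1},\ w\ge 0,\ t\in\mathbf{T}(w)\}$.
   Context: Let $G=(\mathcal{V},\mathcal{A})$ be a directed graph with arc costs $c\in\mathbb{R}^{\mathcal{A}}$, $c\ge0$, arcs partitioned into a nonempty set $\mathcal{A}_1\subsetneq\mathcal{A}$ of tolled arcs and $\mathcal{A}_2=\mathcal{A}\setminus\mathcal{A}_1$ of toll-free arcs; $N$ is the node–arc incidence matrix. There is a finite set $\mathcal{K}$ of commodities, commodity $k$ having origin $o^k$, destination $d^k$, with an $o^k$–$d^k$ path of toll-free arcs assumed to exist; $b^k\in\mathbb{R}^{\mathcal{V}}$ has $b^k_{o^k}=1$, $b^k_{d^k}=-1$, other entries $0$. Tolls are vectors $t\in\mathbb{R}^{\mathcal{A}_1}$, $t\ge0$, identified with the vector $\bar t\in\mathbb{R}^{\mathcal{A}}$ equal to $t$ on $\mathcal{A}_1$ and $0$ on $\mathcal{A}_2$; for $x\in\mathbb{R}^{\mathcal{A}}$, $x_{\mathcal{A}_1}$ denotes its restriction to $\mathcal{A}_1$. Follower $k$'s reaction set is $\mathbf{R}^k(t)=\arg\min_x\{c^\top x+t^\top x_{\mathcal{A}_1}: Nx=b^k,\ x\ge0\}$, and the multi-commodity NPP is $\max_{t,x^k}\{\sum_{k}t^\top x^k_{\mathcal{A}_1}: t\ge0,\ x^k\in\mathbf{R}^k(t)\ \forall k\}$. For $w\in\mathbb{R}^{\mathcal{A}_1}$,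 $w\ge0$, the conjugate follower program is $\max_{t,(y^k)}\{\sum_{k\in\mathcal{K}}(b^k)^\top y^k - w^\top t : N^\top y^k-\bar t\le c\ \forall k\in\mathcal{K},\ t\ge 0\}$ with $t\in\mathbb{R}^{\mathcal{A}_1}$, $y^k\in\mathbb{R}^{\mathcal{V}}$, and $\mathbf{T}(w)$ denotes the set of $t$ that are parts of optimal solutions of this program. *)

(* Defs.v *)
From HB Require Import structures.
From mathcomp Require Import all_boot all_order all_algebra.
From mathcomp Require Import classical_sets reals constructive_ereal ereal.
Set Implicit Arguments. Unset Strict Implicit. Unset Printing Implicit Defensive.
Import Order.TTheory GRing.Theory Num.Theory.
Local Open Scope ring_scope.
Local Open Scope classical_set_scope.

Section NPP.
Variables (R : realType) (V A K : finType).
Variables (src tgt : A -> V).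
Variable c : A -> R.
Variable A1 : {set A}.          (* tolled arcs; A2 = ~: A1 *)
Variables (o d : K -> V).

(* index type of tolled arcs: toll vectors t live in R^{A1} *)
Definition tolled := {a : A | a \in A1}.

Definition tbar (t : tolled -> R) (a : A) : R :=
  match insub a with Some a' => t a' | None => 0 end.

(* node-arc incidence matrix N applied to x in R^A *)
Definition Nmul (x : A -> R) (v : V) : R :=
  \sum_(a : A | src a == v) x a - \sum_(a : A | tgt a == v) x a.

(* N^T applied to y in R^V *)
Definition NTmul (y : V -> R) (a : A) : R := y (src a) - y (tgt a).

Definition bvec (k : K) (v : V) : R :=
  (v == o k)%:R - (v == d k)%:R.

Fixpoint walk (v w : V) (p : seq A) : bool :=
  match p with
  | [::] => v == w
  | a :: p' => (src a == v) && walk (tgt a) w p'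
  end.

Definition tollfree_path (k : K) : Prop :=
  exists p : seq A, all (fun a => a \notin A1) p && walk (o k) (d k) p.

Definition flow_feasible (k : K) (x : A -> R) : Prop :=
  (forall a, 0 <= x a) /\ (forall v, Nmul x v = bvec k v).

Definition follower_cost (t : tolled -> R) (x : A -> R) : R :=
  \sum_(a : A) c a * x a + \sum_(a : tolled) t a * x (val a).

Definition reaction (k : K) (t : tolled -> R) (x : A -> R) : Prop :=
  flow_feasible k x /\
  forall x', flow_feasible k x' -> follower_cost t x <= follower_cost t x'.

Definition revenue (t : tolled -> R) (x : K -> A -> R) : R :=
  \sum_(k : K) \sum_(a : tolled) t a * x k (val a).

Definition NPP_value : \bar R :=
  ereal_sup [set r | exists (t : tolled -> R) (x : K -> A -> R),
     [/\ forall a, 0 <= t a, forall k, reaction k t (x k) & r = (revenue t x)%:E]].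

Definition conj_feasible (t : tolled -> R) (y : K -> V -> R) : Prop :=
  (forall a, 0 <= t a) /\ (forall k a, NTmul (y k) a - tbar t a <= c a).

Definition conj_obj (w : tolled -> R) (t : tolled -> R) (y : K -> V -> R) : R :=
  \sum_(k : K) \sum_(v : V) bvec k v * y k v - \sum_(a : tolled) w a * t a.

Definition Tset (w : tolled -> R) : set (tolled -> R) :=
  [set t | exists y, conj_feasible t y /\
     forall t' y', conj_feasible t' y' -> conj_obj w t' y' <= conj_obj w t y].

Definition wdot (w t : tolled -> R) : R := \sum_(a : tolled) w a * t a.

Definition conj_value : \bar R :=
  ereal_sup [set r | exists (w t : tolled -> R),
     [/\ forall a, 0 <= w a, Tset w t & r = (wdot w t)%:E]].

End NPP.

(* Main.v *)
Require Import Defs.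
From mathcomp Require Import all_boot all_order all_algebra.
From mathcomp Require Import classical_sets reals constructive_ereal ereal.
From mathcomp Require Import lra ring.
Import Order.TTheory GRing.Theory Num.Theory.
Local Open Scope ring_scope.
Set Implicit Arguments. Unset Strict Implicit.

Section Help.
Variables (R : realType) (V A K : finType) (src tgt : A -> V).
Variable A1 : {set A}.

Lemma sum_tolled (t : tolled A1 -> R) (x : A -> R) :
  \sum_(a : tolled A1) t a * x (val a) = \sum_(a : A) tbar t a * x a.
Proof.
rewrite (bigID (fun a => a \in A1)) /= [X in _ = _ + X]big1 ?addr0; last first.
  by move=> a aN; rewrite /tbar insubF ?mul0r //; apply/negbTE.
rewrite (reindex_omap (val : tolled A1 -> A) insub); last first.
  by move=> a aA; rewrite insubT.
apply: eq_big => [[a aA]|[a aA] _] /=; first by rewrite aA insubT /= eqxx.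
by rewrite /tbar insubT.
Qed.

Lemma tbar_ge0 (t : tolled A1 -> R) a : (forall b, 0 <= t b) -> 0 <= tbar t a.
Proof. by move=> h; rewrite /tbar; case: insub. Qed.

Lemma tbar_scale (l : R) (t : tolled A1 -> R) a : tbar (fun b => l * t b) a = l * tbar t a.
Proof. by rewrite /tbar; case: insub => //; rewrite mulr0. Qed.

Definition wcost (l : A -> R) (p : seq A) : R := \sum_(a <- p) l a.
Definition wflow (p : seq A) (a : A) : R := (count_mem a p)%:R.

Lemma sum_wflow (l : A -> R) p : \sum_a l a * wflow p a = wcost l p.
Proof.
elim: p => [|b p IH]; first by rewrite /wcost big_nil big1 // => a _; rewrite /wflow /= mulr0.
rewrite /wcost big_cons -/(wcost l p) -IH.
rewrite (eq_bigr (fun a => l a * (b == a)%:R + l a * wflow p a)); last first.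
  by move=> a _; rewrite /wflow /= natrD mulrDr.
rewrite big_split /=; congr (_ + _).
rewrite (bigD1 b) //= eqxx mulr1 big1 ?addr0 // => a /negbTE ab.
by rewrite eq_sym ab mulr0.
Qed.

Lemma Nmul_wflow p v w u : walk src tgt v w p ->
  Nmul src tgt (wflow p) u = (u == v)%:R - (u == w)%:R.
Proof.
elim: p v => [|b p IH] v /=.
  move/eqP=> ->; rewrite subrr /Nmul !big1 ?subrr // => a _; by rewrite /wflow.
case/andP=> /eqP sb hw.
have := IH _ hw. rewrite /Nmul /wflow /= => E.
rewrite (eq_bigr (fun a => (b == a)%:R + (count_mem a p)%:R)); last by move=> *; rewrite natrD.
rewrite [X in _ - X](eq_bigr (fun a => (b == a)%:R + (count_mem a p)%:R)); last by move=> *; rewrite natrD.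
rewrite !big_split /=.
have -> : forall x y z w : R, x + y - (z + w) = (x - z) + (y - w) by move=> *; rewrite opprD addrACA.
rewrite E.
have h1 : forall f : A -> V, \sum_(a | f a == u) ((b == a)%:R : R) = (f b == u)%:R.
  move=> f; case: (boolP (f b == u)) => fb.
    rewrite (bigD1 b) //= eqxx big1 ?addr0 // => a /andP[_ /negbTE]; by rewrite eq_sym => ->.
  by rewrite big1 // => a; case: (eqVneq b a) => // <-; rewrite (negbTE fb).
rewrite !h1 sb [tgt b == u]eq_sym [v == u]eq_sym.
by rewrite addrA subrK.
Qed.


Lemma sum_ind (F : V -> R) z : \sum_v (v == z)%:R * F v = F z.
Proof.
rewrite (bigD1 z) //= eqxx mul1r big1 ?addr0 // => v /negbTE ->; by rewrite mul0r.
Qed.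

Lemma part_sum (f : A -> V) (G : V -> A -> R) :
  \sum_v \sum_(a | f a == v) G v a = \sum_a G (f a) a.
Proof.
rewrite [RHS](partition_big f xpredT) //=.
apply: eq_bigr => v _; apply: eq_bigr => a /eqP <-; done.
Qed.

Lemma weak_dual (x : A -> R) (y : V -> R) (l : A -> R) o' d' :
  (forall a, 0 <= x a) -> (forall v, Nmul src tgt x v = (v == o')%:R - (v == d')%:R) ->
  (forall a, y (src a) - y (tgt a) <= l a) -> y o' - y d' <= \sum_a l a * x a.
Proof.
move=> hx hN hy.
have key : \sum_v Nmul src tgt x v * y v = \sum_a (y (src a) - y (tgt a)) * x a.
  rewrite /Nmul.
  under eq_bigr do rewrite mulrBl !mulr_suml.
  rewrite sumrB !(part_sum (fun a => _) (fun v a => x a * y v)).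
  rewrite -sumrB; apply: eq_bigr => a _; rewrite mulrBl !(mulrC (x a)) //.
have -> : y o' - y d' = \sum_v Nmul src tgt x v * y v.
  under eq_bigr do rewrite hN mulrBl.
  by rewrite sumrB !sum_ind.
rewrite key; apply: ler_sum => a _; apply: ler_wpM2r => //.
Qed.

Lemma walk_split v w p1 a p2 : walk src tgt v w (p1 ++ a :: p2) -> walk src tgt (tgt a) w p2.
Proof.
elim: p1 v => [|b p1 IH] v /=; first by case/andP.
by case/andP=> _ /IH.
Qed.

Lemma wcost_ge0 (l : A -> R) p : (forall a, 0 <= l a) -> 0 <= wcost l p.
Proof. by move=> hl; rewrite /wcost; apply: sumr_ge0 => a _. Qed.

Lemma walk_uniq (l : A -> R) (hl : forall a, 0 <= l a) p v w : walk src tgt v w p ->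
  exists q, [/\ uniq q, walk src tgt v w q & wcost l q <= wcost l p].
Proof.
elim: p v => [|b p IH] v /=.
  by move=> hw; exists [::]; split.
case/andP=> /eqP sb /IH [r [ur wr cr]].
case: (boolP (b \in r)) => br.
  case/splitPr: br ur wr cr => r1 r2 ur wr cr.
  exists (b :: r2); split.
  - by move: ur; rewrite cat_uniq => /and3P[].
  - by rewrite /= sb eqxx (walk_split wr).
  - rewrite /wcost in cr *; rewrite big_cat /= big_cons in cr; rewrite !big_cons.
    have h1 := wcost_ge0 r1 hl; rewrite /wcost in h1.
    have h2 : 0 <= l b := hl b.
    have h3 := wcost_ge0 r2 hl; rewrite /wcost in h3.
    set X := \sum_(j <- p) l j in cr *.
    set Y := \sum_(j <- r1) l j in cr h1 *.
    set Z := \sum_(j <- r2) l j in cr h3 *.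
    rewrite lerD2l. apply: le_trans cr.
    rewrite addrA -[X in X <= _]add0r lerD2r. by apply: addr_ge0.
exists (b :: r); split => //=.
- by rewrite br.
- by rewrite sb eqxx.
- by rewrite /wcost !big_cons lerD2l.
Qed.

Fixpoint allseqs (n : nat) : seq (seq A) :=
  if n is n'.+1 then [::] :: [seq a :: s | a <- enum A, s <- allseqs n'] else [:: [::]].

Lemma mem_allseqs n s : (size s <= n)%N -> s \in allseqs n.
Proof.
elim: n s => [|n IH] [|a s] //=; rewrite ltnS => hs.
rewrite in_cons; apply/orP; right.
by apply: (allpairs_f (fun a s => a :: s)); rewrite ?mem_enum ?IH.
Qed.

Definition LL := allseqs #|A|.

Lemma uniq_in_LL q : uniq q -> q \in LL.
Proof.
move=> uq; apply: mem_allseqs; rewrite cardE.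
by apply: uniq_leq_size => // a _; rewrite mem_enum.
Qed.

Fixpoint fmin (F : seq A -> R) (P : pred (seq A)) (M : R) (L : seq (seq A)) : R :=
  if L is p :: L' then
    (if P p && (F p <= fmin F P M L') then F p else fmin F P M L') else M.

Lemma fmin_leM (F : seq A -> R) (P : pred (seq A)) M L : fmin F P M L <= M.
Proof.
elim: L => //= p L IH; case: ifP => // /andP[_ h]; exact: le_trans h IH.
Qed.

Lemma fmin_le (F : seq A -> R) (P : pred (seq A)) M L p : p \in L -> P p -> fmin F P M L <= F p.
Proof.
elim: L => //= q L IH; rewrite in_cons => /orP[/eqP <-|pL] Pp.
  rewrite Pp /=; case: ifP => //; by move/negbT; rewrite -ltNge => /ltW.
case: ifP => [/andP[_ h]|_]; last exact: IH.
exact: le_trans h (IH pL Pp).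
Qed.

Lemma fmin_cases (F : seq A -> R) (P : pred (seq A)) M L : fmin F P M L = M \/ exists p, P p /\ fmin F P M L = F p.
Proof.
elim: L => [|q L IH] /=; first by left.
case: ifP => [/andP[Pq _]|_]; last exact: IH.
by right; exists q.
Qed.


Definition pot (l : A -> R) (M : R) (w v : V) : R := fmin (wcost l) (walk src tgt v w) M LL.

Lemma pot_feas l M w (hl : forall a, 0 <= l a) a :
  pot l M w (src a) - pot l M w (tgt a) <= l a.
Proof.
rewrite /pot; case: (fmin_cases (wcost l) (walk src tgt (tgt a) w) M LL) => [->|[p [wp ->]]].
  have := fmin_leM (wcost l) (walk src tgt (src a) w) M LL; rewrite /pot.
  have := hl a; lra.
have wap : walk src tgt (src a) w (a :: p) by rewrite /= eqxx.
have [q [uq wq cq]] := walk_uniq hl wap.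
have := @fmin_le (wcost l) _ M LL q (uniq_in_LL uq) wq; rewrite /pot.
move: cq; rewrite /wcost big_cons; lra.
Qed.

Lemma pot_self l M w (hl : forall a, 0 <= l a) (hM : 0 <= M) : pot l M w w = 0.
Proof.
apply/eqP; rewrite eq_le; apply/andP; split.
  have := @fmin_le (wcost l) (walk src tgt w w) M LL [::] (uniq_in_LL (isT : uniq [::])).
  by rewrite /= eqxx /wcost big_nil => /(_ isT).
rewrite /pot; case: (fmin_cases (wcost l) (walk src tgt w w) M LL) => [->|[p [_ ->]]] //.
exact: wcost_ge0.
Qed.

Lemma pot_lb l M w v q (hl : forall a, 0 <= l a) : walk src tgt v w q -> pot l M w v <= wcost l q.
Proof.
move=> wq; have [q' [uq wq' cq]] := walk_uniq hl wq.
exact: le_trans (@fmin_le (wcost l) _ M LL q' (uniq_in_LL uq) wq') cq.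
Qed.

Lemma pot_cases l M w v : pot l M w v = M \/ exists p, walk src tgt v w p /\ pot l M w v = wcost l p.
Proof. exact: fmin_cases. Qed.

Lemma wcostD (f g : A -> R) p : wcost (fun a => f a + g a) p = wcost f p + wcost g p.
Proof. by rewrite /wcost big_split. Qed.

Lemma wcostZ (lam : R) (f : A -> R) p : wcost (fun a => lam * f a) p = lam * wcost f p.
Proof. by rewrite /wcost mulr_sumr. Qed.

Variable c : A -> R.
Variables (o d : K -> V).

Lemma fc_eq (t : tolled A1 -> R) x : follower_cost c t x = \sum_a (c a + tbar t a) * x a.
Proof.
rewrite /follower_cost sum_tolled -big_split /=; apply: eq_bigr => a _; by rewrite mulrDl.
Qed.

Lemma bvec_sum k (Y : V -> R) : \sum_v bvec R o d k v * Y v = Y (o k) - Y (d k).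
Proof.
rewrite /bvec; under eq_bigr do rewrite mulrBl; by rewrite sumrB !sum_ind.
Qed.

Lemma wflow_feas k p : walk src tgt (o k) (d k) p -> flow_feasible src tgt o d k (wflow p).
Proof.
move=> wp; split; first by move=> a; rewrite /wflow ler0n.
by move=> v; rewrite (Nmul_wflow _ wp).
Qed.


Hypothesis hc : forall a, 0 <= c a.

Lemma Ssum (x : K -> A -> R) (s : tolled A1 -> R) :
  \sum_k \sum_(a : tolled A1) s a * x k (val a) =
  \sum_(a : tolled A1) (\sum_k x k (val a)) * s a.
Proof.
rewrite exchange_big /=; apply: eq_bigr => a _; by rewrite mulr_suml; apply: eq_bigr => k _; rewrite mulrC.
Qed.

Lemma dir1 (t : tolled A1 -> R) (x : K -> A -> R) :
  (forall a, 0 <= t a) -> (forall k, reaction src tgt c o d k t (x k)) ->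
  exists w, [/\ forall a, 0 <= w a, Tset src tgt c o d w t & revenue t x = wdot w t].
Proof.
move=> ht hx.
set w := fun a : tolled A1 => \sum_k x k (val a).
have hl : forall a, 0 <= c a + tbar t a by move=> a; rewrite addr_ge0 ?tbar_ge0.
have hM : forall k, 0 <= follower_cost c t (x k).
  move=> k; rewrite fc_eq; apply: sumr_ge0 => a _; apply: mulr_ge0 => //.
  by case: (hx k) => [[hx0 _] _].
exists w; split.
- by move=> a; apply: sumr_ge0 => k _; case: (hx k) => [[hx0 _] _].
- set y := fun k v => pot (fun a => c a + tbar t a) (follower_cost c t (x k)) (d k) v.
  exists y; split.
    split => // k a; rewrite /NTmul; have := pot_feas (follower_cost c t (x k)) (d k) hl a.
    rewrite /y; lra.
  move=> t' y' [ht' hy'].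
  have up : conj_obj o d w t' y' <= \sum_k \sum_a c a * x k a.
    rewrite /conj_obj.
    have -> : \sum_(a : tolled A1) w a * t' a = \sum_k \sum_a tbar t' a * x k a.
      by rewrite -Ssum; apply: eq_bigr => k _; rewrite sum_tolled.
    rewrite -sumrB; apply: ler_sum => k _; rewrite bvec_sum.
    case: (hx k) => [[hx0 hN] _].
    have := @weak_dual (x k) (y' k) (fun a => c a + tbar t' a) (o k) (d k) hx0 hN.
    have h : forall a, y' k (src a) - y' k (tgt a) <= c a + tbar t' a.
      by move=> a; have := hy' k a; rewrite /NTmul; lra.
    move=> /(_ h).
    have -> : \sum_a (c a + tbar t' a) * x k a = \sum_a c a * x k a + \sum_a tbar t' a * x k a.
      by rewrite -big_split; apply: eq_bigr => a _; rewrite mulrDl.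
    lra.
  apply: le_trans up _.
  rewrite /conj_obj.
  have -> : \sum_(a : tolled A1) w a * t a = \sum_k \sum_a tbar t a * x k a.
    by rewrite -Ssum; apply: eq_bigr => k _; rewrite sum_tolled.
  rewrite -sumrB; apply: ler_sum => k _; rewrite bvec_sum /y pot_self //.
  have -> : \sum_a c a * x k a = follower_cost c t (x k) - \sum_a tbar t a * x k a.
    rewrite fc_eq; have -> : \sum_a (c a + tbar t a) * x k a = \sum_a c a * x k a + \sum_a tbar t a * x k a.
      by rewrite -big_split; apply: eq_bigr => a _; rewrite mulrDl.
    lra.
  rewrite subr0 lerD2r.
  case: (pot_cases (fun a => c a + tbar t a) (follower_cost c t (x k)) (d k) (o k)) => [->|[p [wp ->]]] //.
  rewrite -sum_wflow -fc_eq; case: (hx k) => _; apply; exact: wflow_feas.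
- by rewrite /revenue Ssum /wdot.
Qed.


Lemma dir2 (hpath : forall k, tollfree_path src tgt A1 o d k) (w t : tolled A1 -> R)
  (hw : forall a, 0 <= w a) (Tw : Tset src tgt c o d w t) (lam : R) (h0 : 0 < lam) (h1 : lam < 1) :
  exists (s : tolled A1 -> R) (x : K -> A -> R), [/\ forall a, 0 <= s a, forall k, reaction src tgt c o d k s (x k) &
     lam * wdot w t <= revenue s x].
Proof.
case: Tw => y [[ht hy] opt].
set s := fun a : tolled A1 => lam * t a.
have hs : forall a, 0 <= s a by move=> a; rewrite /s; apply: mulr_ge0; [apply: ltW|apply: ht].
set l := fun a => c a + tbar s a.
have hl : forall a, 0 <= l a by move=> a; rewrite /l addr_ge0 ?tbar_ge0.
have ex : forall k, exists PY : seq A * (V -> R),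
   [/\ walk src tgt (o k) (d k) PY.1, reaction src tgt c o d k s (wflow PY.1),
       forall a, PY.2 (src a) - PY.2 (tgt a) <= l a &
       PY.2 (o k) - PY.2 (d k) = wcost l PY.1].
  move=> k; case: (hpath k) => p0 /andP[_ wp0].
  have [q0 [_ wq0 _]] := walk_uniq hl wp0.
  have hM := wcost_ge0 q0 hl.
  set D := pot l (wcost l q0) (d k).
  have hD := pot_feas (wcost l q0) (d k) hl.
  have hDd : D (d k) = 0 by rewrite /D pot_self.
  have [P [wP eP]] : exists P, walk src tgt (o k) (d k) P /\ D (o k) = wcost l P.
    case: (pot_cases l (wcost l q0) (d k) (o k)) => [e|[p [wp e]]].
      by exists q0.
    by exists p.
  exists (P, D); split => //=.
  - split; first exact: wflow_feas.
    move=> x' [hx0 hN].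
    rewrite !fc_eq sum_wflow -/l -eP.
    have := @weak_dual x' D l (o k) (d k) hx0 hN hD.
    by rewrite hDd subr0.
  - by rewrite hDd subr0.
have [PY hPY] := boolp.choice ex.
set P := fun k => (PY k).1.
set Y := fun k => (PY k).2.
exists s, (fun k => wflow (P k)); split => //.
  by move=> k; case: (hPY k).
have feasY : conj_feasible src tgt c s Y.
  split => // k a; rewrite /NTmul; case: (hPY k) => _ _ h _; have := h a; rewrite /l /Y; lra.
have := opt s Y feasY.
rewrite /conj_obj.
have e1 : \sum_k \sum_v bvec R o d k v * Y k v =
    \sum_k wcost c (P k) + lam * \sum_k wcost (tbar t) (P k).
  rewrite mulr_sumr -big_split; apply: eq_bigr => k _.
  rewrite bvec_sum; case: (hPY k) => _ _ _ ->.
  rewrite /l wcostD; congr (_ + _); rewrite -wcostZ /wcost; apply: eq_bigr => a _.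
  by rewrite tbar_scale.
have e2 : \sum_k \sum_v bvec R o d k v * y k v <=
    \sum_k wcost c (P k) + \sum_k wcost (tbar t) (P k).
  rewrite -big_split /=; apply: ler_sum => k _; rewrite bvec_sum -(wcostD c (tbar t)) -sum_wflow.
  case: (hPY k) => wP _ _ _.
  apply: weak_dual.
  - by move=> a; rewrite /wflow ler0n.
  - by move=> v; rewrite (Nmul_wflow _ wP).
  - by move=> a; have := hy k a; rewrite /NTmul; lra.
have e3 : \sum_(a : tolled A1) w a * s a = lam * wdot w t.
  by rewrite /wdot mulr_sumr; apply: eq_bigr => a _; rewrite /s mulrCA.
have e4 : revenue s (fun k => wflow (P k)) = lam * \sum_k wcost (tbar t) (P k).
  rewrite /revenue mulr_sumr; apply: eq_bigr => k _.
  rewrite sum_tolled sum_wflow -wcostZ /wcost; apply: eq_bigr => a _; by rewrite tbar_scale.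
rewrite e1 e3 e4 => hopt.
move: e2; rewrite /wdot.
set Cc := \sum_k wcost c (P k).
set T := \sum_k wcost (tbar t) (P k).
set W := \sum_(a : tolled A1) w a * t a.
set B := \sum_k \sum_v bvec R o d k v * y k v.
move: hopt; rewrite /wdot -/B -/W -/Cc -/T => hopt e2.
nra.
Qed.


Lemma main_sec (hpath : forall k, tollfree_path src tgt A1 o d k) :
  NPP_value src tgt c A1 o d = conj_value src tgt c A1 o d.
Proof.
apply/eqP; rewrite eq_le; apply/andP; split.
  apply: ereal_sup_le => r [t [x [ht hx ->]]].
  have [w [hw Tw e]] := dir1 ht hx.
  by exists w, t; split => //; rewrite e.
apply: ge_ereal_sup => r [w [t [hw Tw ->]]].
set W := wdot w t.
have H : forall lam, 0 < lam -> lam < 1 -> ((lam * W)%:E <= NPP_value src tgt c A1 o d)%E.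
  move=> lam h0 h1; have [s [x [hs hx hr]]] := dir2 hpath hw Tw h0 h1.
  apply: (@le_trans _ _ (revenue s x)%:E); first by rewrite lee_fin.
  by apply: ereal_sup_ubound; exists s, x; split.
have half0 : (0:R) < 1/2 by lra.
have half1 : (1/2 : R) < 1 by lra.
case E: (NPP_value src tgt c A1 o d) => [v| |];
  [|by rewrite leey|by have := H (1/2) half0 half1; rewrite E].
rewrite lee_fin; have Hv : forall lam, 0 < lam -> lam < 1 -> lam * W <= v.
  by move=> lam h0 h1; have := H lam h0 h1; rewrite E lee_fin.
rewrite leNgt; apply/negP => vW.
have h2 := Hv (1/2) half0 half1.
case: (lerP W 0) => W0; first lra.
have Wv : 0 < W + v by lra.
set lam := (W + v) / (2 * W).
have l0 : 0 < lam by apply: divr_gt0; lra.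
have l1 : lam < 1 by rewrite /lam ltr_pdivrMr; lra.
have e : lam * W = (W + v) / 2.
  rewrite /lam; field; by rewrite gt_eqF.
have := Hv lam l0 l1; rewrite e; lra.
Qed.

End Help.

Theorem proposition1 (R : realType) (V A K : finType) (src tgt : A -> V)
  (c : A -> R) (A1 : {set A}) (o d : K -> V)
  (hc : forall a, 0 <= c a)
  (hA1ne : A1 != finset.set0) (hA1pr : A1 != finset.setT)
  (hod : forall k, o k != d k)
  (hpath : forall k, tollfree_path src tgt A1 o d k) :
  NPP_value src tgt c A1 o d = conj_value src tgt c A1 o d.
Proof.
exact: (@main_sec R V A K src tgt A1 c o d hc hpath).
Qed.
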